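(* Let $n\ge2$ and $1\le m\le n-1$ be integers and let $\alpha$ be real with $n-m<\alpha<m(n-m)$. Then for primes $p$ there exists a subset $G\subset G(n,n-m)$ such that $|G|\approx p^{\alpha}$ and for every $\xi\in\mathbb{F}_p^n\setminus\{0\}$, \[ |\{W\in G:\ \xi\in Per(W)\}|\lesssim |G|\,p^{-(n-m)}. \]
   Context: $\mathbb{F}_p$ is the field with $p$ elements and $G(n,k)$ is the set of all $k$-dimensional linear subspaces of $\mathbb{F}_p^n$. For a subspace $W$, $Per(W)=\{x\in\mathbb{F}_p^n:\ x\cdot w=0\ \text{for all } w\in W\}$ with $x\cdot w=\sum_i x_iw_i$. $|J|$ denotes cardinality. $f\lesssim g$ means $f\le Cg$ with $C$ independent of $p$ and $\xi$; $f\approx g$ means $f\lesssim g$ and $g\lesssim f$. *)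

(* Defs.v *)
From mathcomp Require Import all_boot all_algebra.
From Stdlib Require Import Reals.
Set Implicit Arguments. Unset Strict Implicit. Unset Printing Implicit Defensive.
Import GRing.Theory.

Local Open Scope ring_scope.

Definition dotv (p n : nat) (x w : 'rV['F_p]_n) : 'F_p :=
  \sum_(i < n) x 0 i * w 0 i.

Definition inPer (p n : nat) (W : {vspace 'rV['F_p]_n}) (xi : 'rV['F_p]_n) : bool :=
  [forall w : 'rV['F_p]_n, (w \in W) ==> (dotv xi w == 0)].

(* G is a (finite, duplicate-free list representing a) subset of G(n,k). *)
Definition subset_Grass (p n k : nat) (G : seq {vspace 'rV['F_p]_n}) : Prop :=
  uniq G /\ all (fun W => \dim W == k)%N G.

Definition count_Per (p n : nat) (G : seq {vspace 'rV['F_p]_n}) (xi : 'rV['F_p]_n) : nat :=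
  count (fun W => inPer W xi) G.

(* Main.v *)
Require Import Defs.
From mathcomp Require Import all_boot all_algebra.
From mathcomp Require Import zify.
Set Implicit Arguments. Unset Strict Implicit. Unset Printing Implicit Defensive.
Import GRing.Theory.
Module PA.

Lemma pair_count (D S : finType) (P : pred D) (upd : D -> S -> D) (crd : D -> S) K :
  (forall d s, crd (upd d s) = s) -> (forall d s, upd (upd d s) (crd d) = d) ->
  (forall d, #|[pred s | P (upd d s)]| <= K) -> #|P| * #|S| <= K * #|D|.
Proof.
move=> h1 h2 hK.
have -> : #|P| * #|S| = #|[set x : D * S | P x.1]|.
  have -> : [set x : D * S | P x.1] = setX [set d | P d] [set: S].
    by apply/setP => -[d s]; rewrite !inE andbT.
  by rewrite cardsX cardsT cardsE.
pose f (x : D * S) := (upd x.1 x.2, crd x.1).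
have finj : injective f.
  move=> [d s] [d' s'] [e1 e2].
  have ed : d = d' := etrans (esym (h2 d s)) (etrans (congr2 upd e1 e2) (h2 d' s')).
  subst d'; congr pair; exact: etrans (esym (h1 d s)) (etrans (congr1 crd e1) (h1 d s')).
rewrite -(card_imset _ finj).
apply: (leq_trans (subset_leq_card (_ : _ \subset [set y : D * S | P (upd y.1 y.2)]))).
  apply/subsetP => y /imsetP [[d s]]; rewrite inE /= => Pd ->; by rewrite inE /= h2.
rewrite -sum1_card big_mkcond /=.
rewrite (eq_bigr (fun y : D * S => (fun d s => if P (upd d s) then 1 else 0) y.1 y.2)); last by move=> [d s] _; rewrite inE.
rewrite -(pair_bigA _ (fun d s => if P (upd d s) then 1 else 0)) /=.
rewrite mulnC -sum_nat_const; apply: leq_sum => d _.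
rewrite -big_mkcond /= sum1_card.
apply: leq_trans (hK d); apply: subset_leq_card; apply/subsetP => s; by rewrite !inE.
Qed.

End PA.
Import PA.

Module PB.
Local Open Scope ring_scope.

Section Constr.
Variable F : finFieldType.
Variables (m j' N : nat).
Hypothesis hjm : (j'.+2 <= m)%N.
Variable e : 'I_N -> F.
Hypothesis e_inj : injective e.

Notation Dt := ({ffun 'I_j'.+1 -> F} * 'I_N)%type.
Definition phi (d : Dt) : 'rV[F]_m := \row_(l < m)
  (if (l < j'.+1)%N then d.1 (inord l)
   else d.1 ord0 ^+ (l - j'.+1).+2 + (if (l == m.-1 :> nat) then e d.2 else 0)).

Lemma phi_inj : injective phi.
Proof.
move=> [v y] [v' y'] /rowP h.
have hj : (j'.+1 <= m)%N by apply: ltnW.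
have ev : v = v'.
  apply/ffunP => x; have := h (widen_ord hj x); rewrite !mxE /= ltn_ord.
  by rewrite !inord_val.
subst v'.
have lm : (m.-1 < m)%N by rewrite prednK // (leq_trans _ hjm).
have := h (Ordinal lm); rewrite !mxE /=.
have -> : (m.-1 < j'.+1)%N = false.
  by apply/negbTE; rewrite -leqNgt -ltnS prednK // (leq_trans _ hjm).
by rewrite eqxx => /addrI /e_inj ->.
Qed.

Section Poly.
Variables (d : Dt) (i : 'I_j'.+1) (b : 'rV[F]_m) (c : F).

Definition upd (d : Dt) (s : F) : Dt := ([ffun x => if x == i then s else d.1 x], d.2).

Definition Pl (l : 'I_m) : {poly F} :=
  if (l < j'.+1)%N then (if inord l == i then 'X else (d.1 (inord l))%:P)
  else (if ord0 == i then 'X^((l - j'.+1).+2) else (d.1 ord0 ^+ (l - j'.+1).+2)%:P)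
       + (if (l == m.-1 :> nat) then e d.2 else 0)%:P.

Definition qq : {poly F} := \sum_(l < m) b 0 l *: Pl l - c%:P.

Lemma qq_eval s : qq.[s] = \sum_(l < m) b 0 l * phi (upd d s) 0 l - c.
Proof.
rewrite /qq hornerD hornerN hornerC horner_sum; congr (_ - _).
apply: eq_bigr => l _; rewrite hornerZ; congr (_ * _).
rewrite /Pl mxE /= !ffunE; case: ifP => _.
  by case: ifP => _; rewrite ?hornerX ?hornerC.
by case: ifP => _; rewrite hornerD !hornerC ?hornerXn.
Qed.

Lemma coefPl l t : t != 0%N -> (Pl l)`_t =
  (if (l < j'.+1)%N then (inord l == i) && (t == 1%N)
   else (ord0 == i) && (t == (l - j'.+1).+2))%:R.
Proof.
move=> t0; rewrite /Pl; case: ifP => _.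
  by case: ifP => _; rewrite ?coefX ?coefC ?(negbTE t0) //.
by case: ifP => _; rewrite coefD !coefC ?(negbTE t0) addr0 ?coefXn.
Qed.

Lemma coefqq t : t != 0%N -> qq`_t = \sum_(l < m) b 0 l *
  (if (l < j'.+1)%N then (inord l == i) && (t == 1%N)
   else (ord0 == i) && (t == (l - j'.+1).+2))%:R.
Proof.
move=> t0; rewrite /qq coefB coefC (negbTE t0) subr0 coef_sum.
by apply: eq_bigr => l _; rewrite coefZ coefPl.
Qed.

Lemma size_qq : (size qq <= m.+1)%N.
Proof.
apply/leq_sizeP => t ht.
have t0 : t != 0%N by rewrite -lt0n (leq_trans _ ht).
rewrite coefqq // big1 // => l _.
case: ifP => hl.
  have -> : (t == 1%N) = false by apply/negbTE; apply/eqP; lia.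
  by rewrite andbF mulr0.
have -> : (t == (l - j'.+1).+2) = false.
  apply/negbTE; apply/eqP; have := ltn_ord l; move: hl; lia.
by rewrite andbF mulr0.
Qed.

Let hj : (j'.+1 <= m)%N := ltnW hjm.

Lemma qq_neq0 : (b 0 (widen_ord hj i) != 0) ||
  ((i == ord0) && [forall l : 'I_m, (l < j'.+1)%N ==> (b 0 l == 0)]) -> b != 0 -> qq != 0.
Proof.
case/orP => [hb | /andP [/eqP ei /forallP hb]] bn0.
  apply/eqP => q0; have := coefqq (isT : 1%N != 0%N).
  rewrite q0 coef0 (bigD1 (widen_ord hj i)) //= big1 => [|l hl].
    by rewrite ltn_ord inord_val !eqxx mulr1 addr0 => h; move: hb; rewrite -h eqxx.
  case: ifP => hlj; last by rewrite andbF mulr0.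
  case: eqP => [hi|]; last by rewrite mulr0.
  by move: hl; rewrite -hi; apply/contraNeq => _; apply/eqP/val_inj; rewrite /= inordK.
have [l0 hl0] : exists l0, b 0 l0 != 0.
  apply/existsP; move: bn0; apply: contraNT; rewrite negb_exists => /forallP h.
  by apply/eqP/rowP => l; rewrite mxE; move: (h l); rewrite negbK => /eqP.
have hl0j : (l0 < j'.+1)%N = false by apply/negbTE; apply: contra hl0 => /(implyP (hb l0)).
have t0 : (l0 - j'.+1).+2 != 0%N by [].
apply/eqP => q0; have := coefqq t0.
rewrite q0 coef0 (bigD1 l0) //= big1 => [|l hl].
  by rewrite hl0j ei !eqxx mulr1 addr0 => h; move: hl0; rewrite -h eqxx.
case: ifP => hlj; first by move: (implyP (hb l) hlj) => /eqP ->; rewrite mul0r.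
have -> : ((l0 - j'.+1).+2 == (l - j'.+1).+2) = false.
  apply/negbTE; move: hl; apply: contra => /eqP h; apply/eqP/val_inj => /=.
  move: hlj hl0j h; rewrite /=; lia.
by rewrite andbF mulr0.
Qed.
End Poly.

Let hj : (j'.+1 <= m)%N := ltnW hjm.

Lemma hyper (b : 'rV[F]_m) (c : F) : b != 0 ->
  (#|[pred d : Dt | (\sum_(l < m) b 0 l * phi d 0 l == c)%R]| * #|F| <= m * #|{: Dt}|)%N.
Proof.
move=> bn0.
have [i hi] : exists i : 'I_j'.+1, (b 0 (widen_ord hj i) != 0) ||
    ((i == ord0) && [forall l : 'I_m, (l < j'.+1)%N ==> (b 0 l == 0)]).
  case: (boolP [exists i : 'I_j'.+1, b 0 (widen_ord hj i) != 0]) => [/existsP [i hi]|].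
    by exists i; rewrite hi.
  rewrite negb_exists => /forallP h; exists ord0; rewrite eqxx /=.
  apply/orP; right; apply/forallP => l; apply/implyP => hl.
  have := h (inord l); rewrite negbK.
  by have -> : widen_ord hj (inord l) = l by apply/val_inj; rewrite /= inordK.
apply: (pair_count (upd:=upd i) (crd:=fun d => d.1 i)).
- by move=> d s; rewrite ffunE eqxx.
- by move=> [v y] s; congr pair; apply/ffunP => x; rewrite !ffunE; case: eqP => // ->.
- move=> d.
  have qn := qq_neq0 d c hi bn0.
  apply: (@leq_trans #|[pred s | root (qq d i b c) s]|).
    by apply: subset_leq_card; apply/subsetP => s; rewrite !inE /root qq_eval subr_eq0.
  rewrite -ltnS; apply: leq_trans (size_qq d i b c); rewrite cardE.
  apply: (max_poly_roots qn); last exact: enum_uniq.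
  by apply/allP => s; rewrite mem_enum.
Qed.
End Constr.

End PB.
Import PB.

Module PC.
Local Open Scope ring_scope.

Section Family.
Variables (p k m : nat).
Local Notation F := 'F_p.

Definition Xt (f : 'I_k -> 'rV[F]_m) : k.-tuple 'rV[F]_(k + m) :=
  [tuple row_mx (delta_mx 0 i) (f i) | i < k].
Definition Wf (f : 'I_k -> 'rV[F]_m) : {vspace 'rV[F]_(k + m)} := <<Xt f>>%VS.

Lemma Xnth f (i : 'I_k) : (Xt f)`_i = row_mx (delta_mx 0 i) (f i).
Proof. by rewrite -(tnth_nth 0) tnth_mktuple. Qed.

Lemma sum_delta (a : 'I_k -> F) (i : 'I_k) :
  \sum_(j < k) a j * (delta_mx 0 j : 'rV[F]_k) 0 i = a i.
Proof.
rewrite (bigD1 i) //= mxE !eqxx mulr1 big1 ?addr0 // => j hj.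
by rewrite mxE eq_sym (negbTE hj) andbF mulr0.
Qed.

Lemma sum_delta' (a : 'I_k -> F) (i : 'I_k) :
  \sum_(j < k) a j * (delta_mx 0 i : 'rV[F]_k) 0 j = a i.
Proof.
rewrite (bigD1 i) //= mxE !eqxx mulr1 big1 ?addr0 // => j hj.
by rewrite mxE (negbTE hj) andbF mulr0.
Qed.

Lemma memW f v : v \in Wf f -> rsubmx v = \sum_i lsubmx v 0 i *: f i.
Proof.
move/coord_span => ev; set c := fun i => coord (Xt f) i v.
have hl i : lsubmx v 0 i = c i.
  rewrite ev mxE summxE -(sum_delta c i); apply: eq_bigr => j _.
  by rewrite mxE Xnth row_mxEl.
apply/rowP => l; rewrite summxE.
rewrite [in LHS]ev mxE summxE; apply: eq_bigr => j _.
by rewrite !mxE Xnth row_mxEr -[coord _ j v](hl j) mxE.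
Qed.

Lemma Wf_inj f g : Wf f = Wf g -> forall i, f i = g i.
Proof.
move=> efg i.
have : (Xt f)`_i \in Wf g.
  by rewrite -efg; apply: memv_span; apply: mem_nth; rewrite size_tuple.
move/memW; rewrite Xnth row_mxKr row_mxKl => ->.
rewrite (bigD1 i) //= mxE !eqxx scale1r big1 ?addr0 // => j hj.
by rewrite mxE (negbTE hj) andbF scale0r.
Qed.

Lemma dimW f : \dim (Wf f) = k.
Proof.
have : free (Xt f).
  apply/freeP => c hc i.
  have := congr1 (fun v : 'rV[F]_(k + m) => v 0 (lshift m i)) hc; rewrite [X in X = _ -> _]summxE.
  rewrite (_ : (0 : 'rV[F]_(k + m)) 0 (lshift m i) = 0); last by rewrite mxE.
  move=> h; rewrite -h -{1}(sum_delta c i); apply: eq_bigr => j _.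
  by rewrite Xnth [RHS]mxE row_mxEl.
by move/eqP; rewrite size_tuple.
Qed.

Lemma dotv_row (xi : 'rV[F]_(k + m)) u r :
  dotv xi (row_mx u r) = \sum_i lsubmx xi 0 i * u 0 i + \sum_l rsubmx xi 0 l * r 0 l.
Proof.
rewrite /dotv big_split_ord; congr (_ + _); apply: eq_bigr => i _.
  by rewrite row_mxEl mxE.
by rewrite row_mxEr mxE.
Qed.

Lemma inPerW f xi : inPer (Wf f) xi =
  [forall i, lsubmx xi 0 i + \sum_l rsubmx xi 0 l * f i 0 l == 0].
Proof.
apply/forallP/forallP => h i.
  have := h ((Xt f)`_i).
  rewrite memv_span ?mem_nth ?size_tuple //= Xnth dotv_row.
  by rewrite sum_delta'.
apply/implyP => /memW hw.
rewrite -(hsubmxK i) dotv_row hw.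
have -> : \sum_l rsubmx xi 0 l * (\sum_j lsubmx i 0 j *: f j) 0 l =
    \sum_j lsubmx i 0 j * \sum_l rsubmx xi 0 l * f j 0 l.
  rewrite (eq_bigr (fun l => \sum_j lsubmx i 0 j * (rsubmx xi 0 l * f j 0 l))).
    rewrite exchange_big /=; apply: eq_bigr => j _; rewrite big_distrr //.
  move=> l _; rewrite summxE big_distrr; apply: eq_bigr => j _.
  by rewrite !mxE /= mulrCA.
apply/eqP; rewrite -big_split big1 // => j _ /=.
by rewrite mulrC -mulrDr; move/eqP: (h j) => ->; rewrite mulr0.
Qed.
End Family.

End PC.
Import PC.

Module PE.
Local Open Scope ring_scope.

Lemma cnt (T : finType) (P : pred T) : count P (enum T) = #|[pred x | P x]|.
Proof.
rewrite cardE -size_filter /enum_mem -enumT -filter_predI; congr size.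
by apply: eq_filter => x; rewrite /= andbT.
Qed.

Lemma foldr_bound (I : Type) (s : seq I) (a : I -> nat) p K D :
  (forall i, a i * p <= K * D)%N ->
  (foldr muln 1 (map a s) * p ^ size s <= K ^ size s * D ^ size s)%N.
Proof.
move=> h; elim: s => [|x s IH] /=; first by rewrite !expn0.
by rewrite !expnS mulnACA [X in (_ <= X)%N]mulnACA leq_mul.
Qed.

Section Main.
Variables (p k m : nat) (D : finType) (phi : D -> 'rV['F_p]_m) (K : nat).
Hypothesis phi_inj : injective phi.
Hypothesis hyp : forall (b : 'rV['F_p]_m) (c : 'F_p), b != 0 ->
  (#|[pred d | (\sum_l b 0 l * phi d 0 l == c)%R]| * p <= K * #|D|)%N.

Definition GG : seq {vspace 'rV['F_p]_(k + m)} :=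
  map (fun f : {ffun 'I_k -> D} => Wf (fun i => phi (f i))) (enum {ffun 'I_k -> D}).

Lemma GG_grass : subset_Grass k GG.
Proof.
split.
  rewrite map_inj_uniq ?enum_uniq // => f g /Wf_inj h.
  by apply/ffunP => i; apply: phi_inj; apply: h.
by apply/allP => W /mapP [f _ ->]; rewrite dimW.
Qed.

Lemma GG_size : size GG = (#|D| ^ k)%N.
Proof. by rewrite size_map -cardT card_ffun card_ord. Qed.

Lemma GG_count xi : xi != 0 -> (count_Per GG xi * p ^ k <= K ^ k * #|D| ^ k)%N.
Proof.
move=> xn0; rewrite /count_Per /GG count_map cnt.
case: (eqVneq (rsubmx xi) 0) => hb.
  rewrite eq_card0 // => f; rewrite !inE inPerW; apply/negP => /forallP h.
  move: xn0; rewrite -(hsubmxK xi) hb.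
  have -> : lsubmx xi = 0.
    apply/rowP => i; rewrite [RHS]mxE; have /eqP := h i.
    by rewrite hb big1 ?addr0 // => l _; rewrite mxE mul0r.
  by rewrite row_mx0 eqxx.
have -> : #|[pred f : {ffun 'I_k -> D} | inPer (Wf (fun i => phi (f i))) xi]| =
   #|family (fun i => [pred d | \sum_l rsubmx xi 0 l * phi d 0 l == - lsubmx xi 0 i])|.
  apply: eq_card => f; rewrite !inE inPerW; apply/forallP/familyP => h i; move: (h i);
  by rewrite !inE addrC addr_eq0.
rewrite card_family.
have := @foldr_bound _ (enum 'I_k) (fun i => #|[pred d | (\sum_l rsubmx xi 0 l * phi d 0 l == - lsubmx xi 0 i)%R]|) p K #|D| (fun i => hyp _ hb).
by rewrite size_enum_ord.
Qed.
End Main.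

End PE.
Import PE.

Module PG.

Lemma combo p k m j' N : prime p -> (j'.+2 <= m)%N -> (N <= p)%N ->
  exists G : seq {vspace 'rV['F_p]_(k + m)}, subset_Grass k G /\
    size G = ((p ^ j'.+1 * N) ^ k)%N /\
    forall xi : 'rV['F_p]_(k + m), xi != 0%R ->
      (count_Per G xi * p ^ k <= m ^ k * (p ^ j'.+1 * N) ^ k)%N.
Proof.
move=> pp hjm hN.
pose e (y : 'I_N) : 'F_p := ((y : nat)%:R)%R.
have einj : injective e.
  move=> y y' h; have := val_Fp_nat pp y; rewrite -/(e y) h val_Fp_nat // => h2.
  apply: val_inj; move: h2; rewrite !modn_small //.
    exact: leq_trans (ltn_ord y) hN.
  exact: leq_trans (ltn_ord y') hN.
have cD : #|{: {ffun 'I_j'.+1 -> 'F_p} * 'I_N}| = (p ^ j'.+1 * N)%N.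
  by rewrite card_prod card_ffun card_Fp // !card_ord.
exists (GG k (@phi _ m j' N e)); split; first exact: GG_grass (phi_inj hjm einj).
split; first by rewrite GG_size cD.
move=> xi xn0; rewrite -cD; apply: GG_count => // b c bn0.
have := hyper hjm e c bn0; rewrite card_Fp //.
Qed.

End PG.
Import PG.

From Stdlib Require Import Reals Lra Lia.
From Stdlib Require ZArith.

Lemma INR_muln a b : INR (muln a b) = (INR a * INR b)%R.
Proof. by rewrite -mult_INR. Qed.
Lemma INR_expn a k : INR (expn a k) = (INR a ^ k)%R.
Proof. elim: k => [|k IH]; first by rewrite expn0. by rewrite expnS INR_muln IH. Qed.

Theorem corollary3p4 (n m : nat) (alpha : R) :
  (2 <= n)%N -> (1 <= m)%N -> (m <= n - 1)%N ->
  (INR (n - m) < alpha)%R -> (alpha < INR (m * (n - m)))%R ->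
  exists C : R, (0 < C)%R /\
    forall p : nat, prime p ->
      exists G : seq {vspace 'rV['F_p]_n},
        subset_Grass (n - m) G /\
        (Rpower (INR p) alpha <= C * INR (size G))%R /\
        (INR (size G) <= C * Rpower (INR p) alpha)%R /\
        forall xi : 'rV['F_p]_n, xi != @GRing.zero _ ->
          (INR (count_Per G xi) <= C * INR (size G) * Rpower (INR p) (- INR (n - m)))%R.
Proof.
move=> hn hm1 hmn hka hak.
have [k ek] : exists k, n = (k + m)%N by exists (n - m)%N; rewrite subnK //; lia.
subst n; rewrite addnK in hka hak *.
have k1 : (1 <= k)%N by lia.
have kpos : (0 < INR k)%R by apply lt_0_INR; apply/ltP.
have kn0 : INR k <> 0%R by lra.
set beta := (alpha / INR k)%R.
have ea : alpha = (beta * INR k)%R by rewrite /beta; field.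
have hb1 : (1 < beta)%R.
  apply (Rmult_lt_reg_r (INR k)) => //; rewrite -ea; lra.
have hbm : (beta < INR m)%R.
  apply (Rmult_lt_reg_r (INR k)) => //; rewrite -ea -INR_muln; lra.
set z := Int_part beta.
have [hz1 hz2] := base_Int_part beta.
have z1 : (0 < z)%Z by apply lt_IZR; rewrite -/z in hz1 hz2; lra.
have zm : (z < Z.of_nat m)%Z by apply lt_IZR; rewrite -INR_IZR_INZ; rewrite -/z in hz1; lra.
set j := Z.to_nat z.
have ej : INR j = IZR z by rewrite INR_IZR_INZ Znat.Z2Nat.id //; lia.
have j1 : (0 < j)%N by apply/ltP; lia.
have jm : (j.+1 <= m)%N by apply/leP; lia.
set gam := (beta - INR j)%R.
have hg0 : (0 <= gam)%R by rewrite /gam ej; rewrite -/z in hz1; lra.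
have hg1 : (gam < 1)%R by rewrite /gam ej; rewrite -/z in hz2; lra.
exists (INR (muln (expn 2 k) (expn m k))).
split.
  by apply lt_0_INR; apply/ltP; rewrite muln_gt0 !expn_gt0 /=; lia.
move=> p pp.
have p1 : (1 < INR p)%R by apply: (lt_INR 1); apply/ltP; exact: prime_gt1.
set x := Rpower (INR p) gam.
have x1 : (1 <= x)%R by rewrite -(Rpower_O (INR p)); [apply Rle_Rpower; lra | lra].
have xp : (x < INR p)%R.
  have := Rpower_lt (INR p) gam 1 p1 hg1; rewrite Rpower_1; [rewrite -/x; lra | lra].
have [u1 u2] := archimed x.
set N := Z.to_nat (up x).
have upos : (0 < up x)%Z by apply lt_IZR; lra.
have eN : INR N = IZR (up x) by rewrite INR_IZR_INZ Znat.Z2Nat.id //; lia.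
have Np : (N <= p)%N.
  have : (up x < Z.of_nat p + 1)%Z by apply lt_IZR; rewrite plus_IZR -INR_IZR_INZ; lra.
  by move=> h; apply/leP; lia.
have := @combo p k m j.-1 N pp; rewrite prednK // => /(_ jm Np) [G [hG [hs hc]]].
exists G; split => //.
have epa : Rpower (INR p) alpha = ((INR p ^ j * x) ^ k)%R.
  have -> : alpha = ((INR j + gam) * INR k)%R by rewrite /gam ea; ring.
  rewrite -Rpower_mult Rpower_plus (Rpower_pow j); last by lra.
  rewrite Rpower_pow //; apply: Rmult_lt_0_compat; [apply pow_lt; lra | apply: exp_pos].
have esz : INR (size G) = ((INR p ^ j * INR N) ^ k)%R by rewrite hs INR_expn INR_muln INR_expn.
have eC : INR (muln (expn 2 k) (expn m k)) = (2 ^ k * INR m ^ k)%R.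
  by rewrite INR_muln !INR_expn.
have m1 : (1 <= INR m)%R by apply: (le_INR 1); apply/leP; lia.
have pj : (0 < INR p ^ j)%R by apply pow_lt; lra.
have xN : (x <= INR N)%R by lra.
have N2 : (INR N <= 2 * x)%R by lra.
have C1 : (1 <= 2 ^ k * INR m ^ k)%R.
  rewrite -(Rmult_1_l 1); apply Rmult_le_compat; try lra; apply pow_R1_Rle; lra.
have P0 : (0 <= (INR p ^ j * x) ^ k)%R by apply pow_le; nra.
have Q0 : (0 <= (INR p ^ j * INR N) ^ k)%R by apply pow_le; nra.
have PQ : ((INR p ^ j * x) ^ k <= (INR p ^ j * INR N) ^ k)%R.
  by apply pow_incr; split; nra.
split.
  rewrite epa esz eC; nra.
split.
  rewrite epa esz eC.
  have : ((INR p ^ j * INR N) ^ k <= (2 * (INR p ^ j * x)) ^ k)%R.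
    by apply pow_incr; split; nra.
  move=> h; rewrite (Rpow_mult_distr 2) in h.
  have : (1 <= INR m ^ k)%R by apply pow_R1_Rle; lra.
  nra.
move=> xi xn0.
have := hc xi xn0 => /leP /le_INR; rewrite -hs !INR_muln !INR_expn => h.
rewrite Rpower_Ropp Rpower_pow; last by lra.
have pk : (0 < INR p ^ k)%R by apply pow_lt; lra.
apply (Rmult_le_reg_r (INR p ^ k)) => //.
have -> : (INR 2 ^ k * INR m ^ k * INR (size G) * / INR p ^ k * INR p ^ k =
   INR 2 ^ k * INR m ^ k * INR (size G))%R by field; lra.
have : (1 <= INR 2 ^ k)%R by apply pow_R1_Rle; apply (le_INR 1 2); lia.
have : (0 <= INR (size G))%R by apply pos_INR.
have : (0 <= INR m ^ k)%R by apply pow_le; lra.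
move=> h1 h2 h3.
have h4 : (0 <= INR m ^ k * INR (size G))%R by apply Rmult_le_pos.
have h5 : (0 <= (INR 2 ^ k - 1) * (INR m ^ k * INR (size G)))%R by apply Rmult_le_pos; lra.
nra.
Qed.
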